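(* Let $K$ be a field of characteristic zero, let $(p_n(x))_{n\ge0}$ be a sequence of polynomials in $K[x]$ with $\deg p_n=n$, and let $F^{(y)}:K[x]\to K[x,y]$ be a $K$-linear operator with $F^{(y)}p_n(x)=\sum_{k=0}^np_k(x)p_{n-k}(y)$ for all $n\ge0$. Identify $K[x,y]$ with $K[x]\otimes K[x]$ via $x^iy^j\mapsto x^i\otimes x^j$, and let $\epsilon:K[x]\to K$ be the linear map with $\epsilon p_n=\delta_{n0}$, so that $(K[x],F^{(y)},\epsilon)$ is a coalgebra. Suppose this coalgebra is a bialgebra with respect to the usual multiplication of polynomials. Then there is a constant $c\in K$ such that $F^{(y)}=E^{y-c}$, i.e. $F^{(y)}p(x)=p(x+y-c)$; consequently $(p_n(x))_{n\ge0}$ is a Sheffer sequence; the counit $\epsilon$ is evaluation at $x=c$; and this bialgebra is a Hopf algebra with antipode $\omega:(x-c)^n\mapsto(-1)^n(x-c)^n$.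
   Context: A coalgebra $(V,\Delta,\epsilon)$ has comultiplication $\Delta:V\to V\otimes V$ and counit $\epsilon:V\to K$ satisfying $(I\otimes\Delta)\Delta=(\Delta\otimes I)\Delta$ and $(\epsilon\otimes I)\Delta=I=(I\otimes\epsilon)\Delta$; it is a bialgebra with respect to a multiplication if $\Delta$ and $\epsilon$ are unital algebra homomorphisms. A sequence $(s_n(x))$ with $\deg s_n=n$ is Sheffer if there is a divided power sequence $(q_n)$ (i.e. $\deg q_n=n$ and $q_n(x+y)=\sum_{k}q_k(x)q_{n-k}(y)$) with $s_n(x+y)=\sum_{k=0}^nq_{n-k}(y)s_k(x)$ for all $n$. *)

(* Defs.v *)
From HB Require Import structures.
From mathcomp Require Import all_boot all_order all_algebra.
Set Implicit Arguments. Unset Strict Implicit. Unset Printing Implicit Defensive.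
Import Order.TTheory GRing.Theory Num.Theory.
Local Open Scope ring_scope.

(* K[x,y] is represented as {poly {poly K}}: the outer variable is y, the
   coefficients are polynomials in x.  Under x^i y^j <-> x^i (x) x^j this is
   K[x] (x) K[x] with the tensor-product algebra structure. *)

Definition inx (K : fieldType) (q : {poly K}) : {poly {poly K}} := q%:P.
Definition iny (K : fieldType) (q : {poly K}) : {poly {poly K}} := q ^:P.
Definition Xx (K : fieldType) : {poly {poly K}} := inx 'X.
Definition Yy (K : fieldType) : {poly {poly K}} := 'X.
Definition substxy (K : fieldType) (q : {poly K}) (t : {poly {poly K}}) :
  {poly {poly K}} := (map_poly (fun a : K => (a%:P)%:P) q : {poly {poly {poly K}}}).[t].

(* multiplication m : K[x] (x) K[x] -> K[x],  a(x) b(y) |-> a(x) b(x) *)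
Definition mult (K : fieldType) (r : {poly {poly K}}) : {poly K} := r.['X].

(* (w (x) I) on K[x,y]: apply w to the x-part *)
Definition tensL (K : fieldType) (w : {poly K} -> {poly K}) (r : {poly {poly K}})
  : {poly {poly K}} := map_poly w r.
(* (I (x) w) on K[x,y]: apply w to the y-part *)
Definition tensR (K : fieldType) (w : {poly K} -> {poly K}) (r : {poly {poly K}})
  : {poly {poly K}} := \sum_(j < size r) inx r`_j * iny (w 'X^j).

Definition linK (K : fieldType) (f : {poly K} -> K) :=
  forall (a : K) (q r : {poly K}), f (a *: q + r) = a * f q + f r.
Definition linKK (K : fieldType) (f : {poly K} -> {poly K}) :=
  forall (a : K) (q r : {poly K}), f (a *: q + r) = a *: f q + f r.
Definition linKxy (K : fieldType) (f : {poly K} -> {poly {poly K}}) :=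
  forall (a : K) (q r : {poly K}), f (a *: q + r) = inx a%:P * f q + f r.

Definition divided_power (K : fieldType) (q : nat -> {poly K}) :=
  (forall n, size (q n) = n.+1) /\
  forall n, substxy (q n) (Xx K + Yy K) =
            \sum_(k < n.+1) inx (q k) * iny (q (n - k)%N).

Definition sheffer (K : fieldType) (s : nat -> {poly K}) :=
  (forall n, size (s n) = n.+1) /\
  exists q : nat -> {poly K}, divided_power q /\
    forall n, substxy (s n) (Xx K + Yy K) =
              \sum_(k < n.+1) iny (q (n - k)%N) * inx (s k).

(* Main.v *)
Require Import Defs.
From HB Require Import structures.
From mathcomp Require Import all_boot all_order all_algebra.
Import Order.TTheory GRing.Theory Num.Theory.
Local Open Scope ring_scope.
From mathcomp Require Import ring.


Lemma substxyE (K : fieldType) (q : {poly K}) (t : {poly {poly K}}) : substxy q t = ((q ^:P) ^:P).[t].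
Proof.
rewrite /substxy; congr (_.[t]).
by rewrite -map_poly_comp.
Qed.

Lemma substxyD (K : fieldType) (q s : {poly K}) (t : {poly {poly K}}) : substxy (q + s) t = substxy q t + substxy s t.
Proof. by rewrite !substxyE !rmorphD /= hornerD. Qed.

Lemma substxyM (K : fieldType) (q s : {poly K}) (t : {poly {poly K}}) : substxy (q * s) t = substxy q t * substxy s t.
Proof. by rewrite !substxyE !rmorphM /= hornerM. Qed.

Lemma substxyC (K : fieldType) (a : K) (t : {poly {poly K}}) : substxy a%:P t = (a%:P)%:P.
Proof. by rewrite substxyE !map_polyC hornerC. Qed.

Lemma substxyX (K : fieldType) (t : {poly {poly K}}) : substxy 'X t = t.
Proof. by rewrite substxyE !map_polyX hornerX. Qed.

Lemma substxy0 (K : fieldType) (t : {poly {poly K}}) : substxy 0 t = 0.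
Proof. by rewrite substxyE !rmorph0 horner0. Qed.

Lemma substxy_MXaddC (K : fieldType) (q : {poly K}) (a : K) (t : {poly {poly K}}) :
  substxy (q * 'X + a%:P) t = substxy q t * t + (a%:P)%:P.
Proof. by rewrite substxyD substxyM substxyX substxyC. Qed.

Lemma substxy_comp (K : fieldType) (q s : {poly K}) (t : {poly {poly K}}) : substxy (q \Po s) t = substxy q (substxy s t).
Proof.
elim/poly_ind: q => [|q a IH]; first by rewrite comp_poly0 !substxy0.
by rewrite comp_poly_MXaddC substxyD substxyM IH substxyC
  substxy_MXaddC.
Qed.

Lemma iny_MXaddC (K : fieldType) (q : {poly K}) (a : K) : iny (q * 'X + a%:P) = iny q * 'X + (a%:P)%:P.
Proof. by rewrite /iny rmorphD rmorphM /= map_polyX map_polyC. Qed.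

Lemma psiy_sub (K : fieldType) (q : {poly K}) (t z : {poly {poly K}}) : substxy q t \Po z = substxy q (t \Po z).
Proof.
elim/poly_ind: q => [|q a IH]; first by rewrite !substxy0 comp_poly0.
by rewrite !substxy_MXaddC comp_polyD comp_polyM IH comp_polyC.
Qed.

Lemma psiy_iny (K : fieldType) (b : {poly K}) (c : K) : iny b \Po ('X + (c%:P)%:P) = iny (b \Po ('X + c%:P)).
Proof.
elim/poly_ind: b => [|b a IH].
  by rewrite /iny !rmorph0 ?comp_poly0 ?rmorph0.
rewrite iny_MXaddC comp_polyD comp_polyM IH comp_polyX comp_polyC.
rewrite comp_poly_MXaddC /iny rmorphD rmorphM /= !map_polyC rmorphD /=.
by rewrite map_polyX map_polyC.
Qed.

Lemma psix_sub (K : fieldType) (f : {rmorphism {poly K} -> {poly K}}) (q : {poly K}) (t : {poly {poly K}}) :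
  (forall a, f a%:P = a%:P) ->
  map_poly f (substxy q t) = substxy q (map_poly f t).
Proof.
move=> fC.
elim/poly_ind: q => [|q a IH]; first by rewrite !substxy0 rmorph0.
rewrite !substxy_MXaddC rmorphD rmorphM /= IH map_polyC; congr (_ + _%:P); exact: fC.
Qed.

Lemma psix_iny (K : fieldType) (f : {rmorphism {poly K} -> {poly K}}) (b : {poly K}) :
  (forall a, f a%:P = a%:P) -> map_poly f (iny b) = iny b.
Proof.
move=> fC; rewrite /iny -map_poly_comp; apply: eq_map_poly => a /=.
by rewrite fC.
Qed.

Lemma mult_iny (K : fieldType) (b : {poly K}) : mult (iny b) = b.
Proof.
elim/poly_ind: b => [|b a IH]; first by rewrite /mult /iny !rmorph0 horner0.
by rewrite iny_MXaddC /mult hornerD hornerM hornerX hornerC -/(mult _) IH.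
Qed.


Theorem corollary2 (K : fieldType) (hchar : [pchar K] =i pred0)
  (p : nat -> {poly K}) (hdeg : forall n, size (p n) = n.+1)
  (F : {poly K} -> {poly {poly K}}) (hFlin : linKxy F)
  (hF : forall n, F (p n) = \sum_(k < n.+1) inx (p k) * iny (p (n - k)%N))
  (eps : {poly K} -> K) (hepslin : linK eps)
  (heps : forall n, eps (p n) = (n == 0%N)%:R)
  (hF1 : F 1 = 1) (hFM : forall q r, F (q * r) = F q * F r)
  (heps1 : eps 1 = 1) (hepsM : forall q r, eps (q * r) = eps q * eps r) :
  exists c : K,
    [/\ forall q, F q = substxy q (Xx K + Yy K - inx c%:P),
        sheffer p,
        forall q, eps q = q.[c] &
        exists omega : {poly K} -> {poly K},
          [/\ linKK omega,
              forall n : nat, omega (('X - c%:P) ^+ n) = (-1) ^+ n * ('X - c%:P) ^+ n,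
              forall q, mult (tensL omega (F q)) = (eps q)%:P &
              forall q, mult (tensR omega (F q)) = (eps q)%:P]].
Proof.
have F0 : F 0 = 0.
  have := hFlin 1 0 0; rewrite scale1r addr0 /inx !polyC1 mul1r.
  by rewrite -{1}[F 0]addr0 => /addrI.
have FD q r : F (q + r) = F q + F r.
  by have := hFlin 1 q r; rewrite scale1r /inx !polyC1 mul1r.
have FC a : F a%:P = inx a%:P.
  by have := hFlin a 1 0; rewrite addr0 F0 addr0 hF1 mulr1 alg_polyC.
have e0 : eps 0 = 0.
  have := hepslin 1 0 0; rewrite scale1r addr0 mul1r.
  by rewrite -{1}[eps 0]addr0 => /addrI.
have eD q r : eps (q + r) = eps q + eps r.
  by have := hepslin 1 q r; rewrite scale1r mul1r.
have eC a : eps a%:P = a.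
  by have := hepslin a 1 0; rewrite addr0 e0 addr0 heps1 mulr1 alg_polyC.
have p0 : p 0%N = 1.
  have /eqP/size_poly1P [d _ pd] := hdeg 0%N.
  have d1 : d = 1 by rewrite -(eC d) -pd heps.
  by rewrite pd d1.
set u := (p 1%N)`_1; set v := (p 1%N)`_0.
have p1E : p 1%N = u%:P * 'X + v%:P.
  apply/polyP => i; rewrite coefD coefCM coefX coefC.
  case: i => [|[|i]] /=; first by rewrite mulr0 add0r.
    by rewrite mulr1 addr0.
  by rewrite mulr0 addr0 nth_default // hdeg.
have u0 : u != 0.
  have : (p 1%N)`_(size (p 1%N)).-1 != 0.
    by rewrite -lead_coefE lead_coef_eq0 -size_poly_eq0 hdeg.
  by rewrite hdeg.
set c := eps 'X.
have uc : v = - (u * c).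
  have := heps 1%N; rewrite p1E eD hepsM !eC /= => /eqP.
  by rewrite addrC addr_eq0 => /eqP.
have FX : F 'X = Xx K + Yy K - inx c%:P.
  have h := hF 1%N.
  rewrite big_ord_recr big_ord_recr big_ord0 /= add0r subnn subn0 p0 in h.
  rewrite /inx !polyC1 mul1r in h.
  have iny1 : iny (1 : {poly K}) = 1 by rewrite /iny rmorph1.
  rewrite iny1 mulr1 in h.
  have inyC (a : K) : iny a%:P = (a%:P)%:P by rewrite /iny map_polyC.
  rewrite p1E FD hFM !FC iny_MXaddC inyC in h.
  set U := inx u%:P.
  have hu : inx (u^-1)%:P * U = 1 by rewrite /U /inx -!polyCM mulVf.
  have h2 : U * F 'X = U * (Xx K + Yy K - inx c%:P).
    have eV : inx v%:P = - (U * inx c%:P).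
      by rewrite /U /inx uc !polyCN !polyCM.
    have ex : (u%:P * 'X + v%:P)%:P = U * Xx K + inx v%:P.
      by rewrite polyCD polyCM.
    rewrite ex in h.
    change ((u%:P)%:P) with U in h; change ((v%:P)%:P) with (inx v%:P) in h.
    rewrite eV in h.
    apply: (addIr (-(U * inx c%:P))); rewrite h /Yy; ring.
  by rewrite -[F 'X]mul1r -hu -mulrA h2 mulrA hu mul1r.
set T := Xx K + Yy K - inx c%:P.
have Fsub q : F q = substxy q T.
  elim/poly_ind: q => [|q a IH]; first by rewrite F0 substxy0.
  by rewrite FD hFM FC IH FX substxy_MXaddC.
have epsE q : eps q = q.[c].
  elim/poly_ind: q => [|q a IH]; first by rewrite e0 horner0.
  by rewrite eD hepsM eC IH hornerMXaddC.
exists c; split => //.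
-
  set W := 'X + c%:P.
  set Z := 'X + (c%:P)%:P : {poly {poly K}}.
  have TZ : T \Po Z = Xx K + Yy K.
    rewrite /T /Xx /Yy /inx comp_polyB comp_polyD !comp_polyC comp_polyX /Z.
    by rewrite addrA addrK.
  have key n : substxy (p n) (Xx K + Yy K) =
      \sum_(k < n.+1) inx (p k) * iny (p (n - k)%N \Po W).
    rewrite -TZ -psiy_sub -Fsub hF rmorph_sum /=.
    apply: eq_bigr => k _; rewrite comp_polyM /inx comp_polyC -/(inx _).
    by rewrite psiy_iny.
  split => //; exists (fun m => p m \Po W); split.
    split; first by move=> n; rewrite size_comp_poly2 ?size_XaddC.
    move=> n; rewrite substxy_comp.
    have -> : substxy W (Xx K + Yy K) = map_poly (comp_poly W) (Xx K + Yy K).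
      rewrite substxyD substxyX substxyC rmorphD /= /Xx /Yy /inx map_polyC.
      rewrite /= comp_polyX map_polyX /W polyCD; ring.
    rewrite -psix_sub; last by move=> a; rewrite /= comp_polyC.
    rewrite key rmorph_sum /=; apply: eq_bigr => k _.
    rewrite rmorphM /= /inx map_polyC -/(inx _) psix_iny //.
    by move=> a; rewrite /= comp_polyC.
  by move=> n; rewrite key; apply: eq_bigr => k _; rewrite mulrC.
-
  set w := c%:P *+ 2 - 'X.
  have Tw : mult (map_poly (comp_poly w) T) = c%:P.
    rewrite /T /Xx /inx rmorphB rmorphD /= !map_polyC map_polyX /= comp_polyX.
    rewrite comp_polyC /mult !(hornerD, hornerN, hornerC, hornerX) /w; ring.
  have Tw2 : T.[w] = c%:P.
    rewrite /T /Xx /Yy /inx !(hornerD, hornerN, hornerC, hornerX) /w; ring.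
  exists (comp_poly w); split.
  + by move=> a q r; rewrite comp_polyD comp_polyZ.
  + move=> n; rewrite rmorphXn /= comp_polyB comp_polyX comp_polyC.
    have -> : w - c%:P = - ('X - c%:P) by rewrite /w; ring.
    exact: exprNn.
  + move=> q; rewrite /tensL Fsub epsE.
    elim/poly_ind: q => [|q a IH].
      by rewrite substxy0 rmorph0 /mult horner0 horner0.
    rewrite substxy_MXaddC rmorphD rmorphM /= map_polyC /= comp_polyC.
    rewrite /mult hornerD hornerM hornerC -/(mult _) -/(mult _) IH Tw.
    by rewrite hornerMXaddC polyCD polyCM.
  + move=> q; rewrite Fsub epsE.
    have tR r : mult (tensR (comp_poly w) r) = r.[w].
      rewrite /tensR /mult horner_sum horner_coef; apply: eq_bigr => j _.
      by rewrite hornerM /inx hornerC rmorphXn /= comp_polyX -/(mult _) mult_iny.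
    rewrite tR.
    elim/poly_ind: q => [|q a IH]; first by rewrite substxy0 !horner0.
    rewrite substxy_MXaddC hornerD hornerM hornerC IH Tw2.
    by rewrite hornerMXaddC polyCD polyCM.
Qed.
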